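(* Let $c$ and $n$ be odd positive integers with $n>c>\frac{n}{2}$. There is a bijection between the set of hit-huggers in $S_n$ whose last letter is $n$ and the set of standard Young tableaux of rectangular shape with $2$ rows and $n-c-1$ columns, such that the parity of the Latin reading word of each tableau equals the parity of its corresponding hit-hugger.
   Context: Permutations are written in one-line notation. The order permutation (standardization) of a word $u$ of distinct positive integers of length $\ell$ is the unique $\pi\in S_\ell$ with $\pi_i<\pi_j$ iff $u_i<u_j$. A hit in a permutation is a contiguous subword of length $c$ whose order permutation is a cyclic shift of $12\cdots c$; a hit starts at the position of its first letter. A hit-hugger in $S_n$ is a permutation with exactly two hits, one starting at position $1$ and one starting at position $n-c+1$. Young tableaux are standard, in English notation, with entries $1,\ldots,2(n-c-1)$; the Latin reading word of a tableau is obtained by reading its entries row by row from top to bottom, each row left to right, and its parity is its sign as a permutation of $\{1,\ldots,2(n-c-1)\}$. *)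

(* Defs.v *)
From mathcomp Require Import all_boot.
Set Implicit Arguments. Unset Strict Implicit. Unset Printing Implicit Defensive.

(* Words are sequences of natural numbers; a permutation in S_n in one-line
   notation is a word that is a rearrangement of [:: 1; 2; ...; n]. *)

Definition std (u : seq nat) : seq nat :=
  [seq (count (fun y => y < x) u).+1 | x <- u].

(* A hit of length c starting at (0-indexed) position i, i.e. at the
   1-indexed position i+1: the contiguous subword of length c starting there
   standardizes to a cyclic shift of 12...c. *)
Definition is_hit (c : nat) (w : seq nat) (i : nat) : bool :=
  (i + c <= size w) &&
  [exists k : 'I_c, std (take c (drop i w)) == rot k (iota 1 c)].

Definition hit_starts (c : nat) (w : seq nat) : seq nat :=
  [seq i <- iota 0 (size w) | is_hit c w i].

Definition is_perm_word (n : nat) (w : seq nat) : bool := perm_eq w (iota 1 n).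

(* Hit-hugger in S_n: exactly two hits, starting at positions 1 and n-c+1
   (0-indexed: 0 and n-c). *)
Definition hit_hugger (n c : nat) (w : seq nat) : bool :=
  is_perm_word n w && (hit_starts c w == [:: 0; n - c]).

(* Number of inversions of a word; the sign of a permutation (in one-line
   notation) is (-1)^inversions, so its parity is odd (inversions w). *)
Definition inversions (w : seq nat) : nat :=
  \sum_(i < size w) \sum_(j < size w) ((i < j) && (nth 0 w j < nth 0 w i)).

Definition parity (w : seq nat) : bool := odd (inversions w).

(* Fillings of the 2-row, m-column rectangular Young diagram: T (r, j) is the
   entry in row r (0 = top), column j (0 = leftmost), English notation. *)
Definition filling (m : nat) := {ffun 'I_2 * 'I_m -> nat}.

Definition latin_reading (m : nat) (T : filling m) : seq nat :=
  [seq T (ord0, j) | j <- enum 'I_m] ++ [seq T (ord_max, j) | j <- enum 'I_m].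

Definition is_syt (m : nat) (T : filling m) : bool :=
  [&& perm_eq (latin_reading T) (iota 1 (2 * m)),
      [forall r : 'I_2, forall j : 'I_m, forall j' : 'I_m,
         (j < j') ==> (T (r, j) < T (r, j'))] &
      [forall j : 'I_m, T (ord0, j) < T (ord_max, j)]].

(* Main.v *)
Require Import Defs.
From mathcomp Require Import all_boot zify.
Set Implicit Arguments. Unset Strict Implicit. Unset Printing Implicit Defensive.

Lemma count_split (u : seq nat) x y : x <= y ->
  count (fun z => z < y) u = count (fun z => z < x) u + count (fun z => x <= z < y) u.
Proof.
move=> hxy; elim: u => //= z u ->.
case: (ltnP z x) => h1; case: (ltnP z y) => h2 /=; lia.
Qed.

Lemma count_lt_mono (u : seq nat) x y : x \in u ->
  (count (fun z => z < x) u < count (fun z => z < y) u) = (x < y).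
Proof.
move=> xu; case: (ltnP x y) => hxy.
- rewrite (count_split u (ltnW hxy)) -{1}[count _ u]addn0 ltn_add2l -has_count.
  by apply/hasP; exists x => //; rewrite leqnn.
- rewrite (count_split u hxy); lia.
Qed.

Lemma nth_std (u : seq nat) p : p < size u ->
  nth 0 (std u) p = (count (fun z => z < nth 0 u p) u).+1.
Proof. by move=> hp; rewrite /std (nth_map 0). Qed.

Lemma size_std u : size (std u) = size u.
Proof. by rewrite size_map. Qed.

Lemma std_refl (u : seq nat) p q : p < size u -> q < size u ->
  (nth 0 (std u) p < nth 0 (std u) q) = (nth 0 u p < nth 0 u q).
Proof.
by move=> hp hq; rewrite !nth_std // ltnS count_lt_mono // mem_nth.
Qed.

Lemma nth_rot_iota c k p : k <= c -> p < c ->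
  nth 0 (rot k (iota 1 c)) p = (if p < c - k then k + p else p - (c - k)).+1.
Proof.
move=> hk hp; rewrite /rot nth_cat size_drop size_iota.
case: ifP => h.
- by rewrite nth_drop nth_iota; [lia|lia].
- by rewrite nth_take ?nth_iota; lia.
Qed.

Lemma std_catL (x y : seq nat) : allrel (fun a b => b < a) x y ->
  std (x ++ y) = map (addn (size y)) (std x) ++ std y.
Proof.
move=> /allrelP H; rewrite /std map_cat -map_comp; congr (_ ++ _).
- apply/eq_in_map => a ax /=; rewrite count_cat ?addnS; congr _.+1.
  rewrite addnC; congr (_ + _); rewrite -[size y]count_predT; apply: eq_in_count => b yb.
  exact: H.
- apply/eq_in_map => a ay /=; rewrite count_cat ?addnS; congr _.+1.
  rewrite -[X in _ = X]add0n; congr (_ + _); rewrite -(count_pred0 x); apply: eq_in_count => b xb.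
  by apply/negbTE; rewrite -leqNgt ltnW // H.
Qed.

Lemma std_catR (x y : seq nat) : allrel (fun a b => a < b) x y ->
  std (x ++ y) = std x ++ map (addn (size x)) (std y).
Proof.
move=> /allrelP H; rewrite /std map_cat -map_comp; congr (_ ++ _).
- apply/eq_in_map => a ax /=; rewrite count_cat ?addnS; congr _.+1.
  rewrite -[X in _ = X]addn0; congr (_ + _); rewrite -(count_pred0 y); apply: eq_in_count => b yb.
  by apply/negbTE; rewrite -leqNgt ltnW // H.
- apply/eq_in_map => a ay /=; rewrite count_cat ?addnS; congr _.+1.
  congr (_ + _); rewrite -[size x]count_predT; apply: eq_in_count => b xb.
  exact: H.
Qed.

Lemma std_sorted (x : seq nat) : pairwise ltn x -> std x = iota 1 (size x).
Proof.
elim: x => // a x IH /= /andP [ha hx].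
have -> : a :: x = [:: a] ++ x by [].
rewrite std_catR /=; last by rewrite allrel1l.
by rewrite IH // ltnn -iotaDl.
Qed.

Lemma P_seq (x y : seq nat) : x != [::] -> pairwise ltn x -> pairwise ltn y ->
  allrel (fun a b => b < a) x y ->
  std (x ++ y) = rot (size y) (iota 1 (size (x ++ y))).
Proof.
move=> x0 px py H; rewrite std_catL // !std_sorted // size_cat addnC iotaD.
have := rot_size_cat (iota 1 (size y)) (iota (1 + size y) (size x)).
by rewrite size_iota => ->; rewrite [1 + _]addnC iotaDl.
Qed.

Definition rr (c k p : nat) := (if p < c - k then k + p else p - (c - k)).

Lemma win_size (w : seq nat) c i : i + c <= size w -> size (take c (drop i w)) = c.
Proof. move=> h; rewrite size_take size_drop; case: ltnP; lia. Qed.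

Lemma win_nth (w : seq nat) c i p : i + c <= size w -> p < c ->
  nth 0 (take c (drop i w)) p = nth 0 w (i + p).
Proof. by move=> h hp; rewrite nth_take // nth_drop. Qed.

Lemma hit_rel (w : seq nat) c i : is_hit c w i ->
  i + c <= size w /\ exists2 k, k < c & forall p q, p < c -> q < c ->
    (nth 0 w (i + p) < nth 0 w (i + q)) = (rr c k p < rr c k q).
Proof.
case/andP=> hs /existsP [k /eqP hk]; split => //; exists k => // p q hp hq.
rewrite -(win_nth hs hp) -(win_nth hs hq) -std_refl ?win_size // hk !nth_rot_iota //; exact: ltnW.
Qed.

Lemma inc_adj (f : nat -> nat) l r : (forall p, l <= p -> p.+1 < r -> f p < f p.+1) ->
  forall p q, l <= p -> p < q -> q < r -> f p < f q.
Proof.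
move=> H p q hl; elim: q => // q IH hpq hq.
rewrite ltnS leq_eqVlt in hpq; case/orP: hpq => [/eqP e|hpq].
- by subst q; exact: H hl hq.
- apply: ltn_trans (IH hpq (ltnW hq)) _; apply: H => //; lia.
Qed.

Lemma hit_of (w : seq nat) c i s : i + c <= size w -> 0 < s <= c ->
  (forall p q, p < q -> q < s -> nth 0 w (i + p) < nth 0 w (i + q)) ->
  (forall p q, s <= p -> p < q -> q < c -> nth 0 w (i + p) < nth 0 w (i + q)) ->
  (forall p q, p < s -> s <= q -> q < c -> nth 0 w (i + q) < nth 0 w (i + p)) ->
  is_hit c w i.
Proof.
move=> hs /andP [s0 sc] H1 H2 H3; rewrite /is_hit hs /=.
set W := take c (drop i w).
have hW : size W = c by exact: win_size.
have hx : size (take s W) = s by rewrite size_take hW; case: ltnP; lia.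
have hy : size (drop s W) = c - s by rewrite size_drop hW.
have : std W = rot (size (drop s W)) (iota 1 (size W)).
  rewrite -{1 3}(cat_take_drop s W); apply: P_seq.
  - by rewrite -size_eq0 hx; lia.
  - apply/(pairwiseP 0) => p q; rewrite !inE hx => hp hq hpq.
    rewrite !nth_take ?nth_drop; try lia; exact: H1 hpq hq.
  - apply/(pairwiseP 0) => p q; rewrite !inE hy => hp hq hpq.
    rewrite /W !nth_drop !nth_take ?nth_drop; try lia; apply: H2; lia.
  - apply/allrelP => a b /(nthP 0) [p hp <-] /(nthP 0) [q hq <-].
    move: hp hq; rewrite hx hy => hp hq.
    rewrite /W nth_drop !nth_take ?nth_drop; try lia; apply: H3; lia.
rewrite hy hW => e; apply/existsP.
have hk : c - s < c by lia.
by exists (Ordinal hk); rewrite e.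
Qed.

Lemma sum_count (P : pred nat) (s : seq nat) :
  \sum_(j < size s) P (nth 0 s j) = count P s.
Proof.
elim: s => [|a s IH]; first by rewrite big_ord0.
by rewrite /= big_ord_recl /= -IH.
Qed.

Lemma inv_cons a s : inversions (a :: s) = count (fun x => x < a) s + inversions s.
Proof.
rewrite /inversions /= big_ord_recl /= big_ord_recl /= add0n.
rewrite (sum_count (fun x => x < a)); congr (_ + _).
apply: eq_bigr => i _; rewrite big_ord_recl /= add0n.
by apply: eq_bigr => j _.
Qed.

Lemma inv_nil : inversions [::] = 0.
Proof. by rewrite /inversions big_ord0. Qed.

Definition cross (s1 s2 : seq nat) := \sum_(a <- s1) count (fun x => x < a) s2.

Lemma inv_cat s1 s2 : inversions (s1 ++ s2) = inversions s1 + inversions s2 + cross s1 s2.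
Proof.
elim: s1 => [|a s1 IH]; first by rewrite inv_nil /cross big_nil addn0.
by rewrite cat_cons !inv_cons IH /cross big_cons count_cat; lia.
Qed.

Lemma inv_map_add c s : inversions (map (addn c) s) = inversions s.
Proof.
elim: s => [|a s IH] //=; rewrite !inv_cons IH count_map; congr (_ + _).
by apply: eq_count => x /=; rewrite ltn_add2l.
Qed.

Lemma inv_sorted s : pairwise ltn s -> inversions s = 0.
Proof.
elim: s => [|a s IH] /=; first by rewrite inv_nil.
case/andP=> ha hs; rewrite inv_cons IH // addn0 -(count_pred0 s).
apply: eq_in_count => x xs; apply/negbTE; rewrite -leqNgt ltnW //.
exact: (allP ha).
Qed.

Definition gw k n (t b : seq nat) :=
  (k.+1) :: map (addn k.+1) t ++ iota 1 k ++ map (addn k.+1) b ++ [:: n].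

Definition good m (t b : seq nat) : Prop :=
  [/\ size t = m, size b = m, perm_eq (t ++ b) (iota 1 (2 * m)),
      pairwise ltn t & pairwise ltn b] /\ (forall j, j < m -> nth 0 t j < nth 0 b j).

Lemma good_range m t b : good m t b -> forall a, a \in t ++ b -> 0 < a <= 2 * m.
Proof.
by case=> [[_ _ hp _ _] _] a; rewrite (perm_mem hp) mem_iota; lia.
Qed.

Lemma cross_tY k n t b : (forall a, a \in t -> a.+1 + k < n) ->
  cross (map (addn k.+1) t) (iota 1 k ++ map (addn k.+1) b ++ [:: n])
  = k * size t + cross t b.
Proof.
elim: t => [|a t IH] H; first by rewrite /cross !big_nil muln0.
rewrite /cross /= !big_cons -/(cross _ _) IH; last by move=> x xt; apply: H; rewrite inE xt orbT.
have ha := H a (mem_head _ _).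
rewrite !count_cat count_map /=.
have -> : count (fun x => x < k.+1 + a) (iota 1 k) = k.
  rewrite -[RHS](size_iota 1 k) -count_predT; apply: eq_in_count => x; rewrite mem_iota /=; lia.
have -> : count (preim (addn k.+1) (fun x => x < k.+1 + a)) b = count (fun x => x < a) b.
  by apply: eq_count => x /=; rewrite ltn_add2l.
have -> : n < k.+1 + a = false by apply/negbTE; lia.
rewrite /= mulnS /cross; lia.
Qed.

Lemma cross0 (s1 s2 : seq nat) : (forall a x, a \in s1 -> x \in s2 -> a <= x) -> cross s1 s2 = 0.
Proof.
move=> H; rewrite /cross big_seq big1 // => a ha; rewrite -(count_pred0 s2).
apply: eq_in_count => x hx; apply/negbTE; rewrite -leqNgt; exact: H.
Qed.

Lemma parity_gw m k n t b : good m t b -> odd m -> n = (2 * m + k).+2 ->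
  parity (gw k n t b) = parity (t ++ b).
Proof.
move=> hg om hn; have hr := good_range hg; case: hg => [[st sb _ _ _] _].
have hrt : forall a, a \in t -> 0 < a <= 2 * m by move=> a ha; apply: hr; rewrite mem_cat ha.
have hrb : forall a, a \in b -> 0 < a <= 2 * m by move=> a ha; apply: hr; rewrite mem_cat ha orbT.
rewrite /parity /gw inv_cons !inv_cat !inv_map_add cross_tY; last first.
  by move=> a /hrt; lia.
have pi : pairwise ltn (iota 1 k) by rewrite -sorted_pairwise ?iota_ltn_sorted //; exact: ltn_trans.
rewrite (inv_sorted pi) (cross0 (s1 := iota 1 k)); last first.
  move=> a x; rewrite mem_iota mem_cat inE => ha /orP [/mapP [y _ ->]|/eqP ->]; lia.
rewrite (cross0 (s1 := map _ b)); last first.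
  by move=> a x /mapP [y /hrb hy ->]; rewrite inE => /eqP ->; lia.
rewrite inv_cons inv_nil /= !addn0.
have -> : count (fun x => x < k.+1)
    (map (addn k.+1) t ++ iota 1 k ++ map (addn k.+1) b ++ [:: n]) = k.
  rewrite !count_cat !count_map /= (_ : n < k.+1 = false); last by apply/negbTE; rewrite -leqNgt; lia.
  have -> : count (preim (addn k.+1) (fun x => x < k.+1)) t = 0.
    by rewrite -(count_pred0 t); apply: eq_count => x /=; rewrite ltnNge leq_addr.
  have -> : count (preim (addn k.+1) (fun x => x < k.+1)) b = 0.
    by rewrite -(count_pred0 b); apply: eq_count => x /=; rewrite ltnNge leq_addr.
  rewrite -[RHS](size_iota 1 k) -count_predT /= !addn0 add0n.
  apply: eq_in_count => x; rewrite mem_iota /=; lia.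
rewrite st add0n.
set It := inversions t; set Ib := inversions b; set C := cross t b.
have -> : k + (It + Ib + (k * m + C)) = (It + Ib + C) + k * m.+1 by rewrite mulnS; nia.
by rewrite oddD oddM /= om andbF addbF.
Qed.

Lemma iota_n m k n : n = (2 * m + k).+2 ->
  iota 1 n = iota 1 k ++ k.+1 :: map (addn k.+1) (iota 1 (2 * m)) ++ [:: n].
Proof.
move=> hn; have -> : n = k + (1 + (2 * m + 1)) by lia.
rewrite (_ : map (addn k.+1) (iota 1 (2 * m)) = iota (k.+1 + 1) (2 * m)); last by rewrite iotaDl.
rewrite !iotaD /= add1n; do 3 f_equal; congr [:: _]; lia.
Qed.

Lemma perm_gw m k n t b : n = (2 * m + k).+2 ->
  perm_eq (gw k n t b) (iota 1 n) = perm_eq (t ++ b) (iota 1 (2 * m)).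
Proof.
move=> hn; rewrite (iota_n hn).
have e1 : perm_eq (gw k n t b) ((iota 1 k ++ [:: k.+1; n]) ++ map (addn k.+1) (t ++ b)).
  apply/permP => P; rewrite /gw /= !count_cat /= !count_map !count_cat; lia.
have e2 : perm_eq (iota 1 k ++ k.+1 :: map (addn k.+1) (iota 1 (2 * m)) ++ [:: n])
   ((iota 1 k ++ [:: k.+1; n]) ++ map (addn k.+1) (iota 1 (2 * m))).
  by apply/permP => P; rewrite /= !count_cat /= !count_cat /= count_map; lia.
transitivity (perm_eq ((iota 1 k ++ [:: k.+1; n]) ++ map (addn k.+1) (t ++ b))
   ((iota 1 k ++ [:: k.+1; n]) ++ map (addn k.+1) (iota 1 (2 * m)))).
  apply/idP/idP => h.
  - rewrite perm_sym in e1; apply: (perm_trans e1); exact: (perm_trans h e2).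
  - apply: (perm_trans e1); rewrite perm_sym in e2; exact: (perm_trans h e2).
rewrite perm_cat2l.
apply/idP/idP; first by apply: perm_map_inj; exact: addnI.
exact: perm_map.
Qed.

Lemma ltF (a b : nat) : b <= a -> (a < b) = false.
Proof. by move=> h; apply/negbTE; rewrite -leqNgt. Qed.


Lemma size_gw m k n t b : size t = m -> size b = m -> n = (2 * m + k).+2 ->
  size (gw k n t b) = n.
Proof. by move=> st sb hn; rewrite /gw /= !size_cat !size_map size_iota st sb /=; lia. Qed.

Lemma gw0 k n t b : nth 0 (gw k n t b) 0 = k.+1.
Proof. by []. Qed.

Lemma gwT m k n t b p : size t = m -> p < m -> nth 0 (gw k n t b) p.+1 = k.+1 + nth 0 t p.
Proof. by move=> st hp; rewrite /gw /= nth_cat size_map st hp (nth_map 0) ?st. Qed.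

Lemma gwL m k n t b p : size t = m -> p < k -> nth 0 (gw k n t b) (m.+1 + p) = p.+1.
Proof.
move=> st hp; rewrite /gw addSn /= nth_cat size_map st ltF ?leq_addr //.
by rewrite nth_cat size_iota addKn hp nth_iota // add1n.
Qed.

Lemma gwB m k n t b p : size t = m -> size b = m -> p < m ->
  nth 0 (gw k n t b) (m.+1 + k + p) = k.+1 + nth 0 b p.
Proof.
move=> st sb hp; rewrite /gw !addSn /= nth_cat size_map st ltF; last lia.
rewrite nth_cat size_iota ltF; last lia.
rewrite nth_cat size_map sb (_ : m + k + p - m - k = p); last lia.
by rewrite hp (nth_map 0) ?sb.
Qed.

Lemma gwN m k n t b : size t = m -> size b = m -> n = (2 * m + k).+2 ->
  nth 0 (gw k n t b) n.-1 = n.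
Proof.
move=> st sb hn; rewrite [n.-1](_ : _ = (size (gw k n t b)).-1); last by rewrite (size_gw st sb hn).
by rewrite nth_last /gw /= !last_cat.
Qed.

Lemma filter_iota2 (P : pred nat) n m : m.+1 < n ->
  (forall i, i < n -> P i = (i == 0) || (i == m.+1)) ->
  [seq i <- iota 0 n | P i] = [:: 0; m.+1].
Proof.
move=> hmn H.
rewrite (eq_in_filter (a2 := fun i => (i == 0) || (i == m.+1))); last first.
  by move=> i; rewrite mem_iota => hi; apply: H; lia.
have -> : n = 1 + m + 1 + (n - m.+2) by lia.
rewrite !iotaD !filter_cat /=.
rewrite (eq_in_filter (a2 := pred0) (s := iota 1 m)); last first.
  by move=> i; rewrite mem_iota => hi /=; apply/negbTE; rewrite negb_or; apply/andP; split; apply/eqP; lia.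
rewrite (eq_in_filter (a2 := pred0) (s := iota _ (n - m.+2))); last first.
  by move=> i; rewrite mem_iota => hi /=; apply/negbTE; rewrite negb_or; apply/andP; split; apply/eqP; lia.
rewrite !filter_pred0 /= (_ : 0 + 1 + m = m.+1); last lia.
by rewrite add0n eqxx.
Qed.

Lemma gw_hits m k n c t b : good m t b -> 0 < m -> 0 < k ->
  n = (2 * m + k).+2 -> c = m + k + 1 ->
  forall i, i < n -> is_hit c (gw k n t b) i = (i == 0) || (i == m.+1).
Proof.
move=> hg m0 k0 hn hc.
have hr := good_range hg; case: hg => [[st sb _ pt pb] col].
have hrt : forall p, p < m -> 0 < nth 0 t p <= 2 * m.
  by move=> p hp; apply: hr; rewrite mem_cat mem_nth ?st.
have hrb : forall p, p < m -> 0 < nth 0 b p <= 2 * m.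
  by move=> p hp; apply: hr; rewrite mem_cat mem_nth ?sb ?orbT.
have ltt : forall p q, p < q -> q < m -> nth 0 t p < nth 0 t q.
  by move=> p q hpq hq; apply: (pairwiseP 0 pt); rewrite ?inE ?st //; lia.
have ltb : forall p q, p < q -> q < m -> nth 0 b p < nth 0 b q.
  by move=> p q hpq hq; apply: (pairwiseP 0 pb); rewrite ?inE ?sb //; lia.
set w := gw k n t b.
have sw : size w = n by exact: size_gw st sb hn.
have vT : forall p, 0 < p <= m -> nth 0 w p = k.+1 + nth 0 t p.-1.
  by case=> [|p] /andP [hp0 hp] //; rewrite (gwT (m := m)) //.
have vL : forall p, m < p <= m + k -> nth 0 w p = p - m.
  move=> p hp; rewrite (_ : p = m.+1 + (p - m.+1)); last lia.
  by rewrite (gwL (m := m)) //; lia.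
have vB : forall p, m + k < p < 2 * m + k + 1 -> nth 0 w p = k.+1 + nth 0 b (p - m.+1 - k).
  move=> p hp; rewrite {1}(_ : p = m.+1 + k + (p - m.+1 - k)); last lia.
  by rewrite (gwB (m := m)) //; lia.
have vN : nth 0 w (2 * m + k).+1 = n.
  by rewrite (_ : (2 * m + k).+1 = n.-1) ?(gwN st sb hn) // hn.
have w0 : nth 0 w 0 = k.+1 by [].
move=> i hi.
case: (ltnP m.+1 i) => [hbig|hsmall].
  transitivity false.
    apply/negbTE; rewrite /is_hit sw; apply/nandP; left; rewrite -ltnNge; lia.
  apply/esym/negbTE; rewrite negb_or; apply/andP; split; apply/eqP; lia.
case: (posnP i) => [->|ipos].
  apply: (hit_of (s := m.+1)); rewrite ?sw; try lia.
  - move=> p q hpq hq; rewrite !add0n.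
    apply: (inc_adj (f := nth 0 w) (l := 0) (r := m.+1)) => // p' _ hp'.
    case: p' hp' => [|p'] hp'.
      by rewrite w0 (vT 1) //=; have := hrt 0 m0; lia.
    by rewrite !vT //=; try lia; rewrite ltn_add2l; apply: ltt.
  - by move=> p q hp hpq hq; rewrite !add0n !vL; lia.
  - move=> p q hp hq1 hq2; rewrite !add0n (vL q); try lia.
    case: p hp => [|p] hp; first by rewrite w0; lia.
    by rewrite vT //=; lia.
case: (eqVneq i m.+1) => [->|inm].
  apply: (hit_of (s := c)); rewrite ?sw; try lia.
  move=> p q hpq hq.
  apply: (inc_adj (f := fun p => nth 0 w (m.+1 + p)) (l := 0) (r := c)) => // p' _ hp'.
  case: (ltnP p'.+1 k) => h1.
    by rewrite !vL; lia.
  case: (eqVneq p'.+1 k) => h2.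
    rewrite vL ?vB; try lia; have := hrb (m.+1 + p'.+1 - m.+1 - k); lia.
  case: (ltnP p'.+1 (m + k)) => h3.
    rewrite !vB; try lia; rewrite ltn_add2l; apply: ltb; lia.
  rewrite vB; try lia; rewrite (_ : m.+1 + p'.+1 = (2 * m + k).+1); last lia.
  by rewrite vN; have := hrb (m.+1 + p' - m.+1 - k); lia.

apply/negbTE/negP => /hit_rel [_ [k' hk' H]].
case: (posnP k') => [k'0|k'pos].
  have e := H 0 (m.+1 - i) ltac:(lia) ltac:(lia).
  rewrite k'0 /rr !subn0 !ifT in e; try lia.
  rewrite addn0 (_ : i + (m.+1 - i) = m.+1) in e; last lia.
  have : nth 0 w i < nth 0 w m.+1 by rewrite e; lia.
  rewrite vT ?vL; try lia; have := hrt i.-1; lia.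
have e := H 0 (c - 1) ltac:(lia) ltac:(lia).
rewrite /rr ifT ?ifF in e; try lia.
rewrite addn0 (_ : i + (c - 1) = m + k + i) in e; last lia.
have : ~~ (nth 0 w i < nth 0 w (m + k + i)) by rewrite e -leqNgt; lia.
rewrite vT ?vB; try lia; rewrite (_ : m + k + i - m.+1 - k = i.-1); last lia.
have := col i.-1; lia.
Qed.

Lemma lowpart (X Y : seq nat) N : perm_eq (X ++ Y) (iota 1 N) -> pairwise ltn X ->
  allrel ltn X Y -> X = iota 1 (size X).
Proof.
move=> hp px hxy.
have sY : sorted leq (sort leq Y) := sort_sorted leq_total Y.
have e1 : sort leq (X ++ Y) = X ++ sort leq Y.
  have -> : sort leq (X ++ Y) = sort leq (X ++ sort leq Y).
    apply/perm_sortP; [exact: leq_total | exact: leq_trans | exact: anti_leq |].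
    by rewrite perm_cat2l perm_sym perm_sort.
  apply: sorted_sort; first exact: leq_trans.
  rewrite sorted_pairwise; last exact: leq_trans.
  rewrite pairwise_cat; apply/and3P; split.
  - apply/allrelP => x y hx; rewrite mem_sort => hy; apply: ltnW.
    exact: (allrelP hxy).
  - by apply: sub_pairwise px => x y /ltnW.
  - by rewrite -sorted_pairwise //; exact: leq_trans.
have e2 : sort leq (X ++ Y) = iota 1 N.
  have -> : sort leq (X ++ Y) = sort leq (iota 1 N) by apply/perm_sortP => //;
    [exact: leq_total | exact: leq_trans | exact: anti_leq].
  apply: sorted_sort; first exact: leq_trans.
  exact: iota_sorted.
have hs : size X <= N by rewrite -(size_iota 1 N) -(perm_size hp) size_cat leq_addr.
have e3 : take (size X) (X ++ sort leq Y) = X := take_size_cat _ (erefl _).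
by rewrite -{1}e3 -e1 e2 take_iota (minn_idPl hs).
Qed.

Definition incr (f : nat -> nat) l r := forall p q, l <= p -> p < q -> q < r -> f p < f q.

Lemma glue f l1 r1 l2 r2 : incr f l1 r1 -> incr f l2 r2 -> l1 <= l2 -> l2 < r1 ->
  r1 <= r2 -> incr f l1 r2.
Proof.
move=> H1 H2 h1 h2 h3 p q hp hpq hq.
case: (ltnP q r1) => hq1; first exact: H1.
case: (leqP l2 p) => hp2; first by apply: H2 => //; lia.
apply: (ltn_trans (H1 p l2 _ _ _)) => //; try lia.
apply: H2; lia.
Qed.

Lemma hits_of_HH n c w i : hit_hugger n c w -> i < n ->
  is_hit c w i = (i \in [:: 0; n - c]).
Proof.
case/andP=> hp /eqP hs hi; rewrite -hs /hit_starts mem_filter mem_iota (perm_size hp) size_iota.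
by case: (is_hit c w i) => /=; rewrite ?hi.
Qed.

Lemma pw_iota (f : nat -> nat) len : (forall p q, p < q -> q < len -> f p < f q) ->
  pairwise ltn [seq f p | p <- iota 0 len].
Proof.
move=> H; apply/(pairwiseP 0) => p q; rewrite !inE size_map size_iota => hp hq hpq.
by rewrite !(nth_map 0) ?size_iota // !nth_iota //; apply: H.
Qed.

Lemma map_iota_shift (f : nat -> nat) s len :
  map f (iota s len) = [seq f (s + p) | p <- iota 0 len].
Proof. by rewrite -{1}(addn0 s) iotaDl -map_comp. Qed.

Lemma decomp (w : seq nat) m k n : size w = n -> n = (2 * m + k).+2 ->
  w = nth 0 w 0 :: [seq nth 0 w p.+1 | p <- iota 0 m] ++ [seq nth 0 w (m.+1 + p) | p <- iota 0 k]
        ++ [seq nth 0 w (m.+1 + k + p) | p <- iota 0 m] ++ [:: nth 0 w n.-1].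
Proof.
move=> sw hn; rewrite -{1}(mkseq_nth 0 w) sw /mkseq.
have -> : n = 1 + m + k + m + 1 by lia.
rewrite !iotaD !map_cat /= -!catA; congr (_ :: _ ++ _ ++ _ ++ _).
- by rewrite map_iota_shift; apply: eq_map => p /=; congr nth; lia.
- by rewrite map_iota_shift; apply: eq_map => p /=; congr nth; lia.
- by rewrite map_iota_shift; apply: eq_map => p /=; congr nth; lia.
- by congr [:: nth _ _ _]; lia.
Qed.

Lemma HH_gw m k n c w : 0 < m -> 0 < k -> n = (2 * m + k).+2 -> c = m + k + 1 ->
  hit_hugger n c w -> last 0 w = n -> exists t b, good m t b /\ w = gw k n t b.
Proof.
move=> m0 k0 hn hc hh hl.
have pw : perm_eq w (iota 1 n) by case/andP: hh.
have sw : size w = n by rewrite (perm_size pw) size_iota.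
have uw : uniq w by rewrite (perm_uniq pw) iota_uniq.
set a := nth 0 w.
have ra : forall p, p < n -> 0 < a p <= n.
  move=> p hp; have : a p \in iota 1 n by rewrite -(perm_mem pw) mem_nth // sw.
  rewrite mem_iota; lia.
have da : forall p q, p < n -> q < n -> p != q -> a p != a q.
  by move=> p q hp hq; rewrite /a nth_uniq ?sw.
have an : a n.-1 = n by rewrite /a -{2}hl -nth_last sw.
have nc : n - c = m.+1 by lia.
have hit : forall i, i < n -> is_hit c w i = (i \in [:: 0; m.+1]).
  by move=> i hi; rewrite (hits_of_HH hh hi) nc.
have h1 : is_hit c w m.+1 by rewrite hit ?inE ?eqxx ?orbT //; lia.
have [_ [k1 hk1 R1]] := hit_rel h1.
have k10 : k1 = 0.
  case: (posnP k1) => // k1p; exfalso.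
  have := R1 (c - 1) 0 ltac:(lia) ltac:(lia); rewrite /rr ifF ?ifT; try lia.
  rewrite (_ : m.+1 + (c - 1) = n.-1); last lia.
  rewrite -/a an addn0; have := ra m.+1 ltac:(lia); lia.
have inc1 : incr a m.+1 n.
  move=> p q hp hpq hq.
  have := R1 (p - m.+1) (q - m.+1) ltac:(lia) ltac:(lia); rewrite /rr k10 subn0 !ifT; try lia.
  by rewrite !subnKC //; try lia; move=> ->; lia.
have h0 : is_hit c w 0 by rewrite hit ?inE ?eqxx //; lia.
have [_ [k0' hk0 R0]] := hit_rel h0.
have nohit : forall i, 0 < i <= m -> ~~ is_hit c w i.
  move=> i hi; rewrite hit ?inE; last lia.
  by rewrite negb_or; apply/andP; split; apply/eqP; lia.
(* the window at i is a hit if increasing on [i, n) *)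
have inc_hit : forall i, 0 < i <= m -> incr a i n -> False.
  move=> i hi hinc; move/negP: (nohit i hi); apply.
  apply: (hit_of (s := c)); rewrite ?sw; try lia.
  by move=> p q hpq hq; apply: hinc; lia.
have ek0 : k0' = k.
  case: (posnP k0') => [k00|k0p].
    exfalso; apply: (inc_hit 1); first lia.
    apply: (glue (l1 := 1) (r1 := c) (l2 := m.+1)); try lia; last exact: inc1.
    move=> p q _ hpq hq; have := R0 p q ltac:(lia) ltac:(lia).
    by rewrite /rr k00 subn0 !ifT ?add0n; try lia; move=> ->.
  case: (ltnP (c - k0') m.+1) => hs.
    exfalso; apply: (inc_hit (c - k0')); first lia.
    apply: (glue (l1 := c - k0') (r1 := c) (l2 := m.+1)); try lia; last exact: inc1.
    move=> p q hp hpq hq; have := R0 p q ltac:(lia) ltac:(lia).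
    by rewrite /rr !ifF ?add0n; try lia; move=> ->; lia.
  case: (ltnP m.+1 (c - k0')) => hs2; last lia.
  exfalso; have e := R0 (c - k0').-1 (c - k0') ltac:(lia) ltac:(lia).
  rewrite /rr ifT ?ifF ?subnn ?ltn0 ?add0n in e; try lia.
  have h : a (c - k0').-1 < a (c - k0') by apply: inc1; lia.
  by rewrite /a in h; rewrite h in e.
subst k0'.
have incA : incr a 0 m.+1.
  move=> p q hp hpq hq; have := R0 p q ltac:(lia) ltac:(lia).
  by rewrite /rr !ifT; try lia; move=> ->; lia.
have crossA : forall p q, p <= m -> m < q -> q < c -> a q < a p.
  move=> p q hp hq1 hq2; have := R0 q p ltac:(lia) ltac:(lia).
  by rewrite /rr ifF ?ifT; try lia; move=> ->; lia.
have leA : forall p q, p <= q -> q <= m -> a p <= a q.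
  move=> p q hpq hq; case: (ltngtP p q) => h; [apply: ltnW; apply: incA; lia | lia | by rewrite h].
have le1 : forall p q, m < p -> p <= q -> q < n -> a p <= a q.
  move=> p q hp hpq hq; case: (ltngtP p q) => h; [apply: ltnW; apply: inc1; lia | lia | by rewrite h].
have col : forall i, 0 < i <= m -> a i < a (m + k + i).
  move=> i hi; case: (ltnP (a (m + k + i)) (a i)) => h.
    exfalso; move/negP: (nohit i hi); apply.
    apply: (hit_of (s := m.+1 - i)); rewrite ?sw; try lia.
    - by move=> p q hpq hq; apply: incA; lia.
    - by move=> p q hp hpq hq; apply: inc1; lia.
    - move=> p q hp hq1 hq2.
      have := le1 (i + q) (m + k + i) ltac:(lia) ltac:(lia) ltac:(lia).
      have := leA i (i + p) ltac:(lia) ltac:(lia).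
      rewrite /a in h *; lia.
  rewrite leq_eqVlt in h; case/orP: h => [/eqP h|//].
  by have := da i (m + k + i) ltac:(lia) ltac:(lia) ltac:(lia); rewrite h eqxx.
have dw := decomp sw hn.
set A := [seq nth 0 w p.+1 | p <- iota 0 m] in dw.
set L := [seq nth 0 w (m.+1 + p) | p <- iota 0 k] in dw.
set B := [seq nth 0 w (m.+1 + k + p) | p <- iota 0 m] in dw.
have a0pos : forall y, y \in A ++ B ++ [:: a n.-1] -> a 0 < y.
  move=> y; rewrite !mem_cat inE => /or3P [/mapP [p hp ->]|/mapP [p hp ->]|/eqP ->].
  - by move: hp; rewrite mem_iota => hp; apply: incA; lia.
  - move: hp; rewrite mem_iota => hp.
    have := col p.+1 ltac:(lia); have := incA 0 p.+1 ltac:(lia) ltac:(lia) ltac:(lia).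
    rewrite /a (_ : m + k + p.+1 = m.+1 + k + p); last lia; lia.
  - have := da 0 n.-1 ltac:(lia) ltac:(lia) ltac:(lia); have := ra 0 ltac:(lia).
    by rewrite an => hr0 /eqP hd0; lia.
have Lle : forall x, x \in L ++ [:: a 0] -> x <= a 0.
  move=> x; rewrite mem_cat inE => /orP [/mapP [p hp ->]|/eqP -> //].
  move: hp; rewrite mem_iota => hp; apply: ltnW; apply: crossA; lia.
have pXY : perm_eq ((L ++ [:: a 0]) ++ (A ++ B ++ [:: a n.-1])) (iota 1 n).
  apply: perm_trans pw; rewrite [in X in perm_eq _ X]dw.
  by apply/permP => P; rewrite /= !count_cat /= -/a; lia.
have eX := lowpart pXY.
have pX : pairwise ltn (L ++ [:: a 0]).
  rewrite pairwise_cat /= andbT; apply/andP; split.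
    apply/allrelP => x y /mapP [p hp ->]; rewrite inE => /eqP ->.
    by move: hp; rewrite mem_iota => hp; apply: crossA; lia.
  apply: pw_iota => p q hpq hq; apply: inc1; lia.
have aXY : allrel ltn (L ++ [:: a 0]) (A ++ B ++ [:: a n.-1]).
  by apply/allrelP => x y hx hy; exact: leq_ltn_trans (Lle x hx) (a0pos y hy).
have := eX pX aXY; rewrite size_cat size_map size_iota /= addn1.
have ei : iota 1 k.+1 = rcons (iota 1 k) k.+1 by rewrite -cats1 -{1}[k.+1]addn1 iotaD add1n.
rewrite ei cats1 => /rcons_inj [eL ea0].
have lbA : forall p, p < m -> k.+1 < a p.+1.
  move=> p hp; rewrite -ea0; apply: a0pos; rewrite mem_cat; apply/orP; left.
  by apply: (map_f (fun p => nth 0 w p.+1)); rewrite mem_iota.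
have lbB : forall p, p < m -> k.+1 < a (m.+1 + k + p).
  move=> p hp; rewrite -ea0; apply: a0pos; rewrite !mem_cat; apply/or3P; apply: Or32.
  by apply: (map_f (fun p => nth 0 w (m.+1 + k + p))); rewrite mem_iota.
have mK : forall s, (forall y, y \in s -> k.+1 < y) -> map (addn k.+1) (map (subn^~ k.+1) s) = s.
  move=> s0 H; rewrite -map_comp map_id_in // => y /H /ltnW h /=; exact: subnKC.
have sA : size A = m by rewrite size_map size_iota.
have sB : size B = m by rewrite size_map size_iota.
have nA : forall p, p < m -> nth 0 A p = a p.+1.
  by move=> p hp; rewrite (nth_map 0) ?size_iota // nth_iota.
have nB : forall p, p < m -> nth 0 B p = a (m.+1 + k + p).
  by move=> p hp; rewrite (nth_map 0) ?size_iota // nth_iota.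
have ew : w = gw k n (map (subn^~ k.+1) A) (map (subn^~ k.+1) B).
  rewrite {1}dw /gw -/a ea0 eL an !mK //.
  - by move=> y /(nthP 0) [p hp <-]; rewrite sB in hp; rewrite nB //; apply: lbB.
  - by move=> y /(nthP 0) [p hp <-]; rewrite sA in hp; rewrite nA //; apply: lbA.
have ntA : forall p, p < m -> nth 0 (map (subn^~ k.+1) A) p = a p.+1 - k.+1.
  by move=> p hp; rewrite (nth_map 0) ?sA // nA.
have ntB : forall p, p < m -> nth 0 (map (subn^~ k.+1) B) p = a (m.+1 + k + p) - k.+1.
  by move=> p hp; rewrite (nth_map 0) ?sB // nB.
exists (map (subn^~ k.+1) A), (map (subn^~ k.+1) B); split => //.
split; first split.
- by rewrite size_map.
- by rewrite size_map.
- by rewrite -(perm_gw _ _ hn) -ew.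
- apply/(pairwiseP 0) => p q; rewrite !inE !size_map ?sA ?size_iota => hp hq hpq.
  rewrite !ntA //.
  have := lbA p hp; have := incA p.+1 q.+1 ltac:(lia) ltac:(lia) ltac:(lia).
  rewrite /a; lia.
- apply/(pairwiseP 0) => p q; rewrite !inE !size_map ?sB ?size_iota => hp hq hpq.
  rewrite !ntB //; have := lbB p hp.
  have := inc1 (m.+1 + k + p) (m.+1 + k + q) ltac:(lia) ltac:(lia) ltac:(lia).
  rewrite /a; lia.
- move=> j hj; rewrite ntA // ntB //.
  have := lbA j hj; have := col j.+1 ltac:(lia).
  rewrite (_ : m + k + j.+1 = m.+1 + k + j); last lia.
  rewrite /a; lia.
Qed.

Definition top m (T : filling m) := [seq T (ord0, j) | j <- enum 'I_m].
Definition bot m (T : filling m) := [seq T (ord_max, j) | j <- enum 'I_m].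
Definition mk m (t b : seq nat) : filling m :=
  [ffun rj : 'I_2 * 'I_m => nth 0 (if rj.1 == ord0 then t else b) rj.2].

Lemma lr_tb m (T : filling m) : latin_reading T = top T ++ bot T.
Proof. by []. Qed.

Lemma size_top m (T : filling m) : size (top T) = m.
Proof. by rewrite size_map size_enum_ord. Qed.
Lemma size_bot m (T : filling m) : size (bot T) = m.
Proof. by rewrite size_map size_enum_ord. Qed.

Lemma nth_top m (T : filling m) (j : 'I_m) : nth 0 (top T) j = T (ord0, j).
Proof. by rewrite (nth_map j) ?size_enum_ord // nth_ord_enum. Qed.
Lemma nth_bot m (T : filling m) (j : 'I_m) : nth 0 (bot T) j = T (ord_max, j).
Proof. by rewrite (nth_map j) ?size_enum_ord // nth_ord_enum. Qed.

Lemma top_mk m (t b : seq nat) : size t = m -> top (mk m t b) = t.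
Proof.
move=> st; apply: (@eq_from_nth _ 0); first by rewrite size_top.
move=> i; rewrite size_top => hi.
by rewrite (nth_top _ (Ordinal hi)) ffunE.
Qed.

Lemma bot_mk m (t b : seq nat) : size b = m -> bot (mk m t b) = b.
Proof.
move=> st; apply: (@eq_from_nth _ 0); first by rewrite size_bot.
move=> i; rewrite size_bot => hi.
by rewrite (nth_bot _ (Ordinal hi)) ffunE.
Qed.

Lemma mk_tb m (T : filling m) : mk m (top T) (bot T) = T.
Proof.
apply/ffunP => -[r j]; rewrite ffunE /=.
case: (eqVneq r ord0) => [->|hr]; first by rewrite nth_top.
have -> : r = ord_max by apply/val_inj; case: r hr => [[|[|]]] //= _ _.
by rewrite nth_bot.
Qed.

Lemma syt_good m (T : filling m) : is_syt T <-> good m (top T) (bot T).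
Proof.
split.
- case/and3P=> hp /forallP hr /forallP hc; split; first split.
  + exact: size_top.
  + exact: size_bot.
  + by rewrite -lr_tb.
  + apply/(pairwiseP 0) => p q; rewrite !inE size_top => hp' hq hpq.
    rewrite (nth_top _ (Ordinal hp')) (nth_top _ (Ordinal hq)).
    by have /forallP /(_ (Ordinal hp')) /forallP /(_ (Ordinal hq)) /implyP := hr ord0; apply.
  + apply/(pairwiseP 0) => p q; rewrite !inE size_bot => hp' hq hpq.
    rewrite (nth_bot _ (Ordinal hp')) (nth_bot _ (Ordinal hq)).
    by have /forallP /(_ (Ordinal hp')) /forallP /(_ (Ordinal hq)) /implyP := hr ord_max; apply.
  + move=> j hj; rewrite (nth_top _ (Ordinal hj)) (nth_bot _ (Ordinal hj)).
    exact: hc.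
- case=> [[st sb hp pt pb] col]; apply/and3P; split.
  + by rewrite lr_tb.
  + apply/forallP => r; apply/forallP => j; apply/forallP => j'; apply/implyP => hjj.
    case: (eqVneq r ord0) => [->|hr].
      rewrite -!nth_top; apply: (pairwiseP 0 pt) => //; rewrite inE size_top //.
    have -> : r = ord_max by apply/val_inj; case: r hr => [[|[|]]] //= _ _.
    rewrite -!nth_bot; apply: (pairwiseP 0 pb) => //; rewrite inE size_bot //.
  + apply/forallP => j; rewrite -nth_top -nth_bot; exact: col.
Qed.

Lemma gw_HH m k n c t b : good m t b -> 0 < m -> 0 < k ->
  n = (2 * m + k).+2 -> c = m + k + 1 ->
  hit_hugger n c (gw k n t b) && (last 0 (gw k n t b) == n).
Proof.
move=> hg m0 k0 hn hc; have hg' := hg; case: hg' => [[st sb hp _ _] _].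
apply/andP; split; last by rewrite /gw /= !last_cat.
apply/andP; split; first by rewrite /is_perm_word (perm_gw _ _ hn).
rewrite /hit_starts (size_gw st sb hn) (_ : n - c = m.+1); last lia.
apply/eqP; apply: filter_iota2; first lia.
exact: gw_hits.
Qed.

Definition fmap m k (w : seq nat) : filling m :=
  mk m (map (subn^~ k.+1) (take m (drop 1 w))) (map (subn^~ k.+1) (take m (drop (m.+1 + k) w))).

Lemma f_gw m k n t b : size t = m -> size b = m -> fmap m k (gw k n t b) = mk m t b.
Proof.
move=> st sb; rewrite /fmap /gw /= drop0.
have -> : take m ([seq k.+1 + i | i <- t] ++ iota 1 k ++ [seq k.+1 + i | i <- b] ++ [:: n])
  = [seq k.+1 + i | i <- t] by rewrite -{1}st -(size_map (addn k.+1)) take_size_cat.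
rewrite drop_cat size_map st ltF ?leq_addr // addKn.
rewrite drop_cat size_iota ltnn subnn drop0.
rewrite (_ : take m _ = [seq k.+1 + i | i <- b]); last by rewrite -{1}sb -(size_map (addn k.+1)) take_size_cat.
by rewrite -!map_comp !map_id_in // => x _ /=; rewrite addKn.
Qed.

Theorem lemma2p16 (n c : nat) :
  odd c -> odd n -> c < n -> n < 2 * c ->
  let HH := [pred w : seq nat | hit_hugger n c w && (last 0 w == n)] in
  exists f : seq nat -> filling (n - c - 1),
    [/\ {in HH, forall w, is_syt (f w)},
        {in HH &, injective f},
        (forall T : filling (n - c - 1), is_syt T -> exists2 w, w \in HH & f w = T) &
        {in HH, forall w, parity (latin_reading (f w)) = parity w}].
Proof.
move=> oc on hcn hnc HH.
have h2 : c.+1 < n.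
  case: (ltngtP c.+1 n) => // e; first lia.
  by move: on; rewrite -e /= oc.
have om : odd (n - c - 1).
  by rewrite -subnDA addn1 oddB ?on /= ?oc //; lia.
set m := n - c - 1.
set k := 2 * c - n.
have m0 : 0 < m by rewrite /m; lia.
have k0 : 0 < k by rewrite /k; lia.
have hn : n = (2 * m + k).+2 by rewrite /m /k; lia.
have hc : c = m + k + 1 by rewrite /m /k; lia.
have dec : forall w, w \in HH -> exists t b, good m t b /\ w = gw k n t b.
  move=> w; rewrite inE => /andP [hh /eqP hl]; exact: HH_gw m0 k0 hn hc hh hl.
exists (fmap m k); split.
- move=> w /dec [t [b [hg ->]]]; have hg' := hg; case: hg' => [[st sb _ _ _] _].
  by rewrite f_gw //; apply/syt_good; rewrite top_mk ?bot_mk.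
- move=> w1 w2 /dec [t1 [b1 [hg1 ->]]] /dec [t2 [b2 [hg2 ->]]].
  case: hg1 => [[st1 sb1 _ _ _] _]; case: hg2 => [[st2 sb2 _ _ _] _].
  rewrite !f_gw // => e.
  have et : t1 = t2 by rewrite -(top_mk b1 st1) -(top_mk b2 st2) e.
  have eb : b1 = b2 by rewrite -(bot_mk t1 sb1) -(bot_mk t2 sb2) e.
  by rewrite et eb.
- move=> T /syt_good hg; exists (gw k n (top T) (bot T)).
    by rewrite inE; exact: gw_HH hg m0 k0 hn hc.
  by rewrite f_gw ?size_top ?size_bot // mk_tb.
- move=> w /dec [t [b [hg ->]]]; have hg' := hg; case: hg' => [[st sb _ _ _] _].
  by rewrite f_gw // lr_tb top_mk ?bot_mk // (parity_gw hg om hn).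
Qed.
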